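(* Let $\mathbf{D}$ be a VC-database (a single VC-table $\mathbf{R}$ with global condition $\Phi(\mathbf{R})$) and let $u$ be a statement that is an update $\mathrm{upd}_{\mathit{Set},\theta}$, a delete $\mathrm{del}_{\theta}$, or a constant insert $\mathrm{ins}_{t}$, with its result $u(\mathbf{D})$ on VC-tables defined as in the context. Then $\mathrm{Mod}(u(\mathbf{D}))=u(\mathrm{Mod}(\mathbf{D}))$, where $u(\mathrm{Mod}(\mathbf{D}))=\{u(D)\mid D\in\mathrm{Mod}(\mathbf{D})\}$.
   Context: Fix a universal domain $\mathbb{D}$, a schema $(A_1,\ldots,A_n)$ and a countable set of variables $\Sigma$. Symbolic expressions are built from variables, constants, $+,-,\times,\div$, conditional expressions $\text{if } e_1 \text{ then } e_2 \text{ else } e_3$, comparisons $=,\neq,<,\leq,>,\geq$, $\wedge,\vee,\neg$, $\mathbf{isnull}$, $\mathbf{true}$, $\mathbf{false}$. A VC-table $\mathbf{R}$ is a finite set of tuples $\mathbf{t}$ of arity $n$ whose entries are symbolic expressions, each with a local condition $\phi(\mathbf{R},\mathbf{t})$ (a Boolean symbolic expression); set $\phi(\mathbf{R},\mathbf{t})=\mathbf{false}$ for $\mathbf{t}\notin\mathbf{R}$. It carries a global condition $\Phi(\mathbf{R})$. An assignment $\lambda:\Sigma\to\mathbb{D}$ is extended to expressions homomorphically (operators applied to evaluated arguments, $\lambda(\text{if } e_1 \text{ then } e_2 \text{ else } e_3)=\lambda(e_2)$ if $\lambda(e_1)$ holds and $\lambda(e_3)$ otherwise), to tuples componentwise, and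 to VC-tables by $\lambda(\mathbf{R})=\{\lambda(\mathbf{t})\mid\mathbf{t}\in\mathbf{R}\wedge\lambda(\phi(\mathbf{R},\mathbf{t}))\}$. The set of possible worlds is $\mathrm{Mod}(\mathbf{R})=\{D\mid\exists\lambda:\lambda(\mathbf{R})=D\wedge\lambda(\Phi(\mathbf{R}))\}$. On concrete relations: $\mathrm{upd}_{\mathit{Set},\theta}(R)=\{\mathit{Set}(t)\mid t\in R,\theta(t)\}\cup\{t\mid t\in R,\neg\theta(t)\}$ with $\mathit{Set}=(e_1,\ldots,e_n)$, $\mathrm{del}_{\theta}(R)=\{t\in R\mid\neg\theta(t)\}$, $\mathrm{ins}_t(R)=R\cup\{t\}$. On VC-tables: for $\mathbf{t}$, $\theta(\mathbf{t})$ and $e_i(\mathbf{t})$ denote substituting each attribute reference $A_j$ by $\mathbf{t}.A_j$. Update: for each $\mathbf{t}\in\mathbf{R}$ choose fresh variables $x_{\mathbf{t},A_1},\ldots,x_{\mathbf{t},A_n}$ (distinct, not occurring in $\mathbf{R}$ or its conditions) and let $\mathbf{t}_{new}=(x_{\mathbf{t},A_1},\ldots,x_{\mathbf{t},A_n})$; then $\mathrm{upd}_{\mathit{Set},\theta}(\mathbf{R})=\{\mathbf{t}_{new}\mid\mathbf{t}\in\mathbf{R}\}$ with $\phi(\cdot,\mathbf{t}_{new})=\phi(\mathbf{R},\mathbf{t})$ and global condition $\Phi(\mathbf{R})\wedge\bigwedge_{\mathbf{t}\in\mathbf{R}}\bigwedge_{i=1}^n x_{\mathbf{t},A_i}=(\text{if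 }\theta(\mathbf{t})\text{ then }e_i(\mathbf{t})\text{ else }\mathbf{t}.A_i)$. Delete: $\mathrm{del}_\theta(\mathbf{R})=\mathbf{R}$ with local conditions $\phi(\mathbf{R},\mathbf{t})\wedge\neg\theta(\mathbf{t})$ and global condition $\Phi(\mathbf{R})$. Constant insert: $\mathrm{ins}_t(\mathbf{R})=\mathbf{R}\cup\{t\}$ with $\phi(\cdot,t)=\mathbf{true}$, other local conditions unchanged, global condition $\Phi(\mathbf{R})$. *)

(* Defs.v *)
From mathcomp Require Import all_boot.
From Stdlib Require List.

Set Implicit Arguments.
Unset Strict Implicit.
Unset Printing Implicit Defensive.

Record domain := Domain {
  dcar :> Type;
  ddec : forall x y : dcar, {x = y} + {x <> y};
  dnull : dcar;
  dtrue : dcar;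
  dfalse : dcar;
  dtrue_neq_dfalse : dtrue <> dfalse;
  dadd : dcar -> dcar -> dcar;
  dsub : dcar -> dcar -> dcar;
  dmul : dcar -> dcar -> dcar;
  ddiv : dcar -> dcar -> dcar;
  dlt : dcar -> dcar -> bool;
  dle : dcar -> dcar -> bool
}.

(* Symbolic expressions over atoms of type [A]:                        *)
(*  A = nat      : expressions over the variables Sigma (VC-tables),    *)
(*  A = 'I_n     : expressions over attribute references A_1..A_n       *)
(*                 (conditions theta and Set-expressions of statements). *)
Inductive expr (D : domain) (A : Type) : Type :=
  | Atom of A
  | Const of D
  | Plus of expr D A & expr D A
  | Minus of expr D A & expr D A
  | Times of expr D A & expr D A
  | Div of expr D A & expr D A
  | Ite of expr D A & expr D A & expr D A
  | Eq of expr D A & expr D A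
  | Neq of expr D A & expr D A
  | Lt of expr D A & expr D A
  | Le of expr D A & expr D A
  | Gt of expr D A & expr D A
  | Ge of expr D A & expr D A
  | And of expr D A & expr D A
  | Or of expr D A & expr D A
  | Not of expr D A
  | IsNull of expr D A
  | ETrue
  | EFalse.

Arguments ETrue {D A}.
Arguments Atom {D A}.
Arguments Const {D A}.
Arguments Plus {D A}.
Arguments Minus {D A}.
Arguments Times {D A}.
Arguments Div {D A}.
Arguments Ite {D A}.
Arguments Eq {D A}.
Arguments Neq {D A}.
Arguments Lt {D A}.
Arguments Le {D A}.
Arguments Gt {D A}.
Arguments Ge {D A}.
Arguments And {D A}.
Arguments Or {D A}.
Arguments Not {D A}.
Arguments IsNull {D A}.
Arguments EFalse {D A}.

Section Sem.
Variable D : domain.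

Definition is_true_val (v : D) : bool := if ddec v (dtrue D) then true else false.
Definition of_bool (b : bool) : D := if b then dtrue D else dfalse D.

Definition holds (v : D) : Prop := v = dtrue D.

Fixpoint eval (A : Type) (rho : A -> D) (e : expr D A) : D :=
  match e with
  | Atom a => rho a
  | Const c => c
  | Plus e1 e2 => dadd (eval rho e1) (eval rho e2)
  | Minus e1 e2 => dsub (eval rho e1) (eval rho e2)
  | Times e1 e2 => dmul (eval rho e1) (eval rho e2)
  | Div e1 e2 => ddiv (eval rho e1) (eval rho e2)
  | Ite e1 e2 e3 => if is_true_val (eval rho e1) then eval rho e2 else eval rho e3
  | Eq e1 e2 => of_bool (if ddec (eval rho e1) (eval rho e2) then true else false)
  | Neq e1 e2 => of_bool (if ddec (eval rho e1) (eval rho e2) then false else true)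
  | Lt e1 e2 => of_bool (dlt (eval rho e1) (eval rho e2))
  | Le e1 e2 => of_bool (dle (eval rho e1) (eval rho e2))
  | Gt e1 e2 => of_bool (dlt (eval rho e2) (eval rho e1))
  | Ge e1 e2 => of_bool (dle (eval rho e2) (eval rho e1))
  | And e1 e2 => of_bool (is_true_val (eval rho e1) && is_true_val (eval rho e2))
  | Or e1 e2 => of_bool (is_true_val (eval rho e1) || is_true_val (eval rho e2))
  | Not e1 => of_bool (~~ is_true_val (eval rho e1))
  | IsNull e1 => of_bool (if ddec (eval rho e1) (dnull D) then true else false)
  | ETrue => dtrue D
  | EFalse => dfalse D
  end.

Fixpoint subst (A B : Type) (f : A -> expr D B) (e : expr D A) : expr D B :=
  match e with
  | Atom a => f a
  | Const c => Const c
  | Plus e1 e2 => Plus (subst f e1) (subst f e2)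
  | Minus e1 e2 => Minus (subst f e1) (subst f e2)
  | Times e1 e2 => Times (subst f e1) (subst f e2)
  | Div e1 e2 => Div (subst f e1) (subst f e2)
  | Ite e1 e2 e3 => Ite (subst f e1) (subst f e2) (subst f e3)
  | Eq e1 e2 => Eq (subst f e1) (subst f e2)
  | Neq e1 e2 => Neq (subst f e1) (subst f e2)
  | Lt e1 e2 => Lt (subst f e1) (subst f e2)
  | Le e1 e2 => Le (subst f e1) (subst f e2)
  | Gt e1 e2 => Gt (subst f e1) (subst f e2)
  | Ge e1 e2 => Ge (subst f e1) (subst f e2)
  | And e1 e2 => And (subst f e1) (subst f e2)
  | Or e1 e2 => Or (subst f e1) (subst f e2)
  | Not e1 => Not (subst f e1)
  | IsNull e1 => IsNull (subst f e1)
  | ETrue => ETrue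
  | EFalse => EFalse
  end.

Fixpoint occurs (x : nat) (e : expr D nat) : Prop :=
  match e with
  | Atom y => x = y
  | Const _ | ETrue | EFalse => False
  | Plus e1 e2 | Minus e1 e2 | Times e1 e2 | Div e1 e2
  | Eq e1 e2 | Neq e1 e2 | Lt e1 e2 | Le e1 e2 | Gt e1 e2 | Ge e1 e2
  | And e1 e2 | Or e1 e2 => occurs x e1 \/ occurs x e2
  | Ite e1 e2 e3 => occurs x e1 \/ occurs x e2 \/ occurs x e3
  | Not e1 | IsNull e1 => occurs x e1
  end.

Variable n : nat.

Definition ctuple := 'I_n -> D.
Definition crel := ctuple -> Prop.

(* VC-tables: a finite collection of symbolic tuples, each with its    *)
(* local condition, plus a global condition.                            *)
Definition vtuple := 'I_n -> expr D nat.
Record vctable := VCTable {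
  vrows : seq (vtuple * expr D nat);
  vglobal : expr D nat
}.

Definition inst (lam : nat -> D) (R : vctable) : crel :=
  fun r => exists row, List.In row (vrows R) /\ holds (eval lam row.2) /\
                       r = (fun i => eval lam (row.1 i)).

Definition Mod (R : vctable) : crel -> Prop :=
  fun Dr => exists lam : nat -> D, inst lam R = Dr /\ holds (eval lam (vglobal R)).

Inductive stmt :=
  | Upd of ('I_n -> expr D 'I_n) & expr D 'I_n
  | Del of expr D 'I_n
  | Ins of ctuple.

Definition capply (u : stmt) (Rc : crel) : crel :=
  match u with
  | Upd set theta => fun r =>
      (exists t, Rc t /\ holds (eval t theta) /\ r = (fun i => eval t (set i)))
      \/ (Rc r /\ ~ holds (eval r theta))
  | Del theta => fun r => Rc r /\ ~ holds (eval r theta)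
  | Ins t => fun r => Rc r \/ r = t
  end.

Definition image_stmt (u : stmt) (M : crel -> Prop) : crel -> Prop :=
  fun Dr => exists D0, M D0 /\ Dr = capply u D0.

(* Fresh variables: fv k i is the variable x_{t,A_i} for the k-th tuple  *)
(* t of R; they must be pairwise distinct and not occur in R (entries,   *)
(* local conditions) nor in the global condition.                       *)
Definition fresh_vars (R : vctable) (fv : nat -> 'I_n -> nat) : Prop :=
  (forall k1 k2 i1 i2, k1 < size (vrows R) -> k2 < size (vrows R) ->
      fv k1 i1 = fv k2 i2 -> k1 = k2 /\ i1 = i2) /\
  (forall k i, k < size (vrows R) ->
      ~ occurs (fv k i) (vglobal R) /\
      (forall row, List.In row (vrows R) ->
         ~ occurs (fv k i) row.2 /\ forall j, ~ occurs (fv k i) (row.1 j))).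

Definition vc_upd_rows (fv : nat -> 'I_n -> nat) (rs : seq (vtuple * expr D nat)) :=
  map (fun p : nat * (vtuple * expr D nat) =>
         ((fun i => Atom (fv p.1 i)) : vtuple, p.2.2))
      (zip (iota 0 (size rs)) rs).

Definition vc_upd_global (set : 'I_n -> expr D 'I_n) (theta : expr D 'I_n)
    (fv : nat -> 'I_n -> nat) (R : vctable) : expr D nat :=
  foldr (fun (p : nat * (vtuple * expr D nat)) acc =>
           foldr (fun (i : 'I_n) acc' =>
                    And acc'
                      (Eq (Atom (fv p.1 i))
                          (Ite (subst p.2.1 theta) (subst p.2.1 (set i)) (p.2.1 i))))
                 acc (enum 'I_n))
        (vglobal R) (zip (iota 0 (size (vrows R))) (vrows R)).

Definition vc_apply (u : stmt) (fv : nat -> 'I_n -> nat) (R : vctable) : vctable :=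
  match u with
  | Upd set theta => VCTable (vc_upd_rows fv (vrows R)) (vc_upd_global set theta fv R)
  | Del theta =>
      VCTable (map (fun row : vtuple * expr D nat =>
                      (row.1, And row.2 (Not (subst row.1 theta)))) (vrows R))
              (vglobal R)
  | Ins t =>
      VCTable (vrows R ++ [:: ((fun i => Const (t i)) : vtuple, ETrue)]) (vglobal R)
  end.

End Sem.

(* Main.v *)
Require Import Defs.
From mathcomp Require Import all_boot.
From mathcomp Require Import zify.
From Stdlib Require Import FunctionalExtensionality PropExtensionality.
From Stdlib Require List.

Set Implicit Arguments.
Unset Strict Implicit.
Unset Printing Implicit Defensive.

Lemma In_map (A B : Type) (f : A -> B) (s : seq A) y :
  List.In y (map f s) <-> exists x, f x = y /\ List.In x s.
Proof.
elim: s => [|a s IH] /=; first by split => // [[x []]].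
split.
- case=> [<-|H]; first by exists a; auto.
  have [x [<- H']] := proj1 IH H; exists x; auto.
- case=> x [Hx [Ha|H]]; first by left; rewrite -Hx Ha.
  right; apply: (proj2 IH); exists x; auto.
Qed.

Lemma In_cat (A : Type) (s t : seq A) y :
  List.In y (s ++ t) <-> List.In y s \/ List.In y t.
Proof. elim: s => [|a s IH] /=; tauto. Qed.

Lemma In_zip_r (S T : Type) (s : seq S) (t : seq T) k x :
  List.In (k, x) (zip s t) -> List.In x t.
Proof.
elim: s t => [|a s IH] [|b t] //=.
case=> [[_ <-]|H]; [by left | right; exact: IH H].
Qed.

Lemma In_zip_iota_ex (T : Type) (rs : seq T) m x :
  List.In x rs -> exists k, List.In (k, x) (zip (iota m (size rs)) rs).
Proof.
elim: rs m => [|a rs IH] m //=.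
case=> [<-|H]; first by exists m; left.
have [k Hk] := IH m.+1 H; exists k; right; exact: Hk.
Qed.

Lemma in_zip_iota (T : Type) (rs : seq T) m k x d :
  List.In (k, x) (zip (iota m (size rs)) rs) ->
  m <= k < m + size rs /\ x = nth d rs (k - m).
Proof.
elim: rs m => [|a rs IH] m //=.
case=> [[<- <-]|/IH [h ->]].
- rewrite subnn; split => //; lia.
- have -> : k - m = (k - m.+1).+1 by lia.
  split => //; lia.
Qed.

Lemma In_mem (T : eqType) (x : T) (s : seq T) : x \in s -> List.In x s.
Proof.
elim: s => [|a s IH] //=; rewrite in_cons; case/orP => [/eqP ->|H]; [by left | right; exact: IH].
Qed.

Lemma In_enum n (i : 'I_n) : List.In i (enum 'I_n).
Proof. apply: In_mem; by rewrite mem_enum. Qed.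

Section H.
Variable D : domain.

Lemma holds_of_bool b : holds (of_bool D b) <-> b.
Proof.
case: b => /=; rewrite /holds /of_bool; split => // H.
case: (@dtrue_neq_dfalse D); by rewrite H.
Qed.

Lemma itv (v : D) : is_true_val v = true <-> holds v.
Proof. rewrite /is_true_val /holds; case: ddec => //. Qed.

Lemma itv_of_bool b : is_true_val (of_bool D b) = b.
Proof.
rewrite /is_true_val /of_bool; case: b; case: ddec => // H.
case: (@dtrue_neq_dfalse D); by rewrite H.
Qed.

Lemma eval_subst (A B : Type) (f : A -> expr D B) (rho : B -> D) e :
  eval rho (subst f e) = eval (fun a => eval rho (f a)) e.
Proof.
induction e; simpl; rewrite ?IHe1 ?IHe2 ?IHe3 ?IHe; reflexivity.
Qed.

Lemma eval_ext (rho rho' : nat -> D) e :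
  (forall x, occurs x e -> rho x = rho' x) -> eval rho e = eval rho' e.
Proof.
induction e; simpl; intros H;
 repeat match goal with
 | IH : (forall x, occurs x ?e -> _) -> eval rho ?e = eval rho' ?e |- _ =>
    rewrite IH; [clear IH | intros; apply H; tauto]
 end; auto.
Qed.

Lemma holds_And lam (a b : expr D nat) :
  holds (eval lam (And a b)) <-> holds (eval lam a) /\ holds (eval lam b).
Proof.
rewrite /= holds_of_bool; split.
- by case/andP => /itv ? /itv ?.
- by case => /itv -> /itv ->.
Qed.

Lemma holds_Eq lam (a b : expr D nat) :
  holds (eval lam (Eq a b)) <-> eval lam a = eval lam b.
Proof. rewrite /= holds_of_bool; case: ddec => //. Qed.

Lemma holds_Not (A : Type) (lam : A -> D) (a : expr D A) :
  holds (eval lam (Not a)) <-> ~ holds (eval lam a).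
Proof.
rewrite /= holds_of_bool; split.
- by move=> /negP H /itv H'; apply: H.
- by move=> H; apply/negP => /itv.
Qed.

Variable n : nat.

Lemma fold_inner (lam : nat -> D) (F : 'I_n -> expr D nat) (acc : expr D nat)
  (s : seq 'I_n) :
  holds (eval lam (foldr (fun i acc' => And acc' (F i)) acc s)) <->
  holds (eval lam acc) /\ (forall i, List.In i s -> holds (eval lam (F i))).
Proof.
elim: s => [|a s IH] /=; first by split; [move=> ?; split | case].
rewrite (holds_And lam) IH; split.
- case=> [[H1 H2] H3]; split => // i [<-|]; auto.
- case=> H1 H2; split; [split => //; auto | auto].
Qed.

Lemma fold_outer (set : 'I_n -> expr D 'I_n) theta (fv : nat -> 'I_n -> nat)
  lam g (l : seq (nat * (vtuple D n * expr D nat))) :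
  holds (eval lam (foldr (fun (p : nat * (vtuple D n * expr D nat)) acc =>
           foldr (fun (i : 'I_n) acc' =>
                    And acc'
                      (Eq (Atom (fv p.1 i))
                          (Ite (subst p.2.1 theta) (subst p.2.1 (set i)) (p.2.1 i))))
                 acc (enum 'I_n)) g l))
  <-> holds (eval lam g) /\ forall p, List.In p l -> forall i,
        lam (fv p.1 i) = eval lam (Ite (subst p.2.1 theta) (subst p.2.1 (set i)) (p.2.1 i)).
Proof.
elim: l => [|p l IH] /=; first by split; [move=> ?; split | case].
etransitivity; first exact: (fold_inner lam (fun i => Eq (Atom (fv p.1 i))
             (Ite (subst p.2.1 theta) (subst p.2.1 (set i)) (p.2.1 i)))).
rewrite IH; split.
- case=> [[H1 H2] H3]; split => // q [<-|Hq] i; last by auto.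
  exact: (proj1 (holds_Eq _ _ _) (H3 i (In_enum i))).
- case=> H1 H2; split; first by split => //; auto.
  move=> i _; apply: (proj2 (holds_Eq lam (Atom (fv p.1 i)) _)); exact: (H2 p (or_introl erefl) i).
Qed.

End H.

Lemma crel_ext D n (P Q : crel D n) : (forall r, P r <-> Q r) -> P = Q.
Proof.
move=> H; apply: functional_extensionality => r; apply: propositional_extensionality; exact: H.
Qed.

Lemma inst_del D n (R : vctable D n) theta lam :
  inst lam (vc_apply (Del theta) (fun _ _ => 0) R) = capply (Del theta) (inst lam R).
Proof.
apply: crel_ext => r; rewrite /inst /=; split.
- case=> row [/In_map [row0 [<- Hin]] [/holds_And [Hl /holds_Not Hn] ->]].
  split; first by exists row0.
  by rewrite eval_subst in Hn.
- case=> [[row [Hin [Hl ->]]] Hn].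
  exists (row.1, And row.2 (Not (subst row.1 theta))); split.
    apply/In_map; exists row; split => //.
  split => //; apply/holds_And; split => //; apply/holds_Not.
  by rewrite eval_subst.
Qed.

Lemma inst_ins D n (R : vctable D n) t lam :
  inst lam (vc_apply (Ins t) (fun _ _ => 0) R) = capply (Ins t) (inst lam R).
Proof.
apply: crel_ext => r; rewrite /inst /=; split.
- case=> row [/In_cat [Hin|[<-|[]]] [Hl ->]].
  + by left; exists row.
  + by right.
- case=> [[row [Hin [Hl ->]]]|->].
  + exists row; split => //; apply/In_cat; by left.
  + exists ((fun i => Const (t i)) : vtuple D n, ETrue); split => //.
    apply/In_cat; right; by left.
Qed.

Lemma inst_upd D n (R : vctable D n) set theta fv lam :
  holds (eval lam (vc_upd_global set theta fv R)) ->
  holds (eval lam (vglobal R)) /\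
  inst lam (vc_apply (Upd set theta) fv R) = capply (Upd set theta) (inst lam R).
Proof.
rewrite /vc_upd_global => /(fold_outer _ _ _ _) [Hg Heq]; split => //.
have Heq' : forall k row, List.In (k, row) (zip (iota 0 (size (vrows R))) (vrows R)) ->
   forall i, lam (fv k i) =
     (if is_true_val (eval (fun j => eval lam (row.1 j)) theta)
      then eval (fun j => eval lam (row.1 j)) (set i) else eval lam (row.1 i)).
  by move=> k row H i; rewrite (Heq _ H i) /= !eval_subst.
apply: crel_ext => r; rewrite /inst /= /vc_upd_rows; split.
- case=> row [/In_map [[k row0] [<- Hin]] [Hl ->]] /=.
  have Hr := In_zip_r Hin.
  case Ht: (is_true_val (eval (fun j => eval lam (row0.1 j)) theta)).
  + left; exists (fun j => eval lam (row0.1 j)); split; first by exists row0.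
    split; first exact/itv.
    apply: functional_extensionality => i /=; by rewrite (Heq' _ _ Hin) Ht.
  + right.
    have -> : (fun i => lam (fv k i)) = (fun j => eval lam (row0.1 j)).
      apply: functional_extensionality => i /=; by rewrite (Heq' _ _ Hin) Ht.
    split; first by exists row0.
    by move=> /itv; rewrite Ht.
- case=> [[t0 [[row [Hin [Hl ->]]] [Ht ->]]]|[[row [Hin [Hl ->]]] Hn]].
  + have [k Hk] := In_zip_iota_ex 0 Hin.
    exists ((fun i => Atom (fv k i)) : vtuple D n, row.2); split.
      apply/In_map; exists (k, row); split => //.
    split => //=; apply: functional_extensionality => i.
    by rewrite (Heq' _ _ Hk) (proj2 (itv _) Ht).
  + have [k Hk] := In_zip_iota_ex 0 Hin.
    exists ((fun i => Atom (fv k i)) : vtuple D n, row.2); split.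
      apply/In_map; exists (k, row); split => //.
    split => //=; apply: functional_extensionality => i.
    rewrite (Heq' _ _ Hk).
    case: ifP => // /itv H; by case: Hn.
Qed.

Lemma upd_exists D n (R : vctable D n) set theta fv lam :
  fresh_vars R fv -> holds (eval lam (vglobal R)) ->
  exists lam', holds (eval lam' (vc_upd_global set theta fv R)) /\
     inst lam' R = inst lam R.
Proof.
move=> [finj ffresh] Hg.
set rs := vrows R; set N := size rs.
pose d : vtuple D n * expr D nat := ((fun _ => ETrue), ETrue).
pose val (k : nat) (i : 'I_n) :=
  let row := nth d rs k in let t0 := fun j => eval lam (row.1 j) in
  if is_true_val (eval t0 theta) then eval t0 (set i) else t0 i.
pose lam' x := if [pick ki : 'I_N * 'I_n | fv ki.1 ki.2 == x] is Some ki
               then val ki.1 ki.2 else lam x.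
have F1 : forall k i, k < N -> lam' (fv k i) = val k i.
  move=> k i hk; rewrite /lam'; case: pickP => [ki /eqP H | H].
    have [-> ->] := finj _ _ _ _ (ltn_ord ki.1) hk H; done.
  by move: (H (Ordinal hk, i)); rewrite /= eqxx.
have F2 : forall x, (forall k i, k < N -> fv k i <> x) -> lam' x = lam x.
  move=> x Hx; rewrite /lam'; case: pickP => [ki /eqP H|//].
  by case: (Hx _ _ (ltn_ord ki.1) H).
have F3 : forall e, (forall k i, k < N -> ~ occurs (fv k i) e) -> eval lam' e = eval lam e.
  move=> e He; apply: eval_ext => x Hx; apply: F2 => k i hk Hfx.
  by apply: (He k i hk); rewrite Hfx.
have Frow : forall row, List.In row rs ->
    eval lam' row.2 = eval lam row.2 /\ forall j, eval lam' (row.1 j) = eval lam (row.1 j).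
  move=> row Hin; split; last move=> j; apply: F3 => k i hk; 
    have [_ H] := ffresh k i hk; have [H1 H2] := H row Hin; auto.
exists lam'; split.
- rewrite /vc_upd_global; apply/(fold_outer _ _ _ _); split.
    by rewrite F3 // => k i hk; have [H _] := ffresh k i hk.
  move=> [k row] Hin i /=.
  have [/andP [_ hk] Hrow] := in_zip_iota d Hin.
  rewrite subn0 in Hrow hk.
  have Hr := In_zip_r Hin.
  rewrite F1 // !eval_subst /val -Hrow.
  have -> : (fun a => eval lam' (row.1 a)) = (fun a => eval lam (row.1 a)).
    apply: functional_extensionality => a; exact: (proj2 (Frow _ Hr)).
  by rewrite (proj2 (Frow _ Hr)).
- apply: crel_ext => r; rewrite /inst; split.
  + case=> row [Hin [Hl ->]]; exists row; split => //.
    have [E1 E2] := Frow _ Hin; rewrite -E1; split => //.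
    apply: functional_extensionality => j; by rewrite E2.
  + case=> row [Hin [Hl ->]]; exists row; split => //.
    have [E1 E2] := Frow _ Hin; rewrite E1; split => //.
    apply: functional_extensionality => j; by rewrite E2.
Qed.

Theorem mainTheorem2 (D : domain) (n : nat) (R : vctable D n) (u : stmt D n)
    (fv : nat -> 'I_n -> nat) :
  fresh_vars R fv ->
  Mod (vc_apply u fv R) = image_stmt u (Mod R).
Proof.
move=> Hf.
apply: functional_extensionality => Dr; apply: propositional_extensionality.
rewrite /Mod /image_stmt; case: u => [set theta|theta|t].
- split.
  + case=> lam [<- Hg]; have [Hg' E] := inst_upd Hg.
    exists (inst lam R); split; [by exists lam | exact: E].
  + case=> D0 [[lam [<- Hg]] ->].
    have [lam' [Hg' E]] := upd_exists set theta Hf Hg.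
    exists lam'; split => //; rewrite -E; exact: (proj2 (inst_upd Hg')).
- have E := @inst_del D n R theta.
  split.
  + case=> lam [<- Hg]; exists (inst lam R); split; [by exists lam | exact: E].
  + case=> D0 [[lam [<- Hg]] ->]; exists lam; split => //; exact: E.
- have E := @inst_ins D n R t.
  split.
  + case=> lam [<- Hg]; exists (inst lam R); split; [by exists lam | exact: E].
  + case=> D0 [[lam [<- Hg]] ->]; exists lam; split => //; exact: E.
Qed.
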